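(* Let $\hat x=(\dots,x_2,x_1)\in\mathrm{Im}(\Psi^+)$ satisfy $x_m\le p_m$ for all $m\ge1$, and let $k\ge1$. The following are equivalent: (1) $c'_{2l+i_k}(x_{k+1}-p_{k+1})-c'_{2l+i_k-1}(x_k-p_k)\le0$ for all $l\ge1$; (2) $\gamma_{k+1}p_{k+1}-p_k+x_k-\gamma_{k+1}x_{k+1}\ge0$.
   Context: Let $a_1,a_2\in\mathbb Z_{\ge1}$ with $a_1a_2>4$, $A=\begin{pmatrix}2&-a_1\\-a_2&2\end{pmatrix}$, $\mathfrak g=\mathfrak g(A)$ with simple roots $\alpha_1,\alpha_2$, coroots $\alpha_i^\vee$, fundamental weights $\Lambda_1,\Lambda_2$. For $k\in\mathbb Z$, $i_k=1$ if $k$ odd, $i_k=2$ if $k$ even (so $i_k\in\{1,2\}$ is also used as an integer). $\mathbb Z^{+\infty}_{\ge0}$ is the set of sequences $(\dots,x_2,x_1)$ of nonnegative integers, almost all zero, with the Nakashima–Zelevinsky crystal structure for the sequence $(\dots,i_2,i_1)$, and $\Psi^+:\mathcal B(\infty)\hookrightarrow\mathbb Z^{+\infty}_{\ge0}$ the corresponding crystal embedding of the crystal basis of $U_q^-(\mathfrak g)$ (sending the highest element to the zero sequence). Put $\alpha=\frac{a_1a_2+\sqrt{a_1^2a_2^2-4a_1a_2}}{2a_2}$, $\beta=\frac{a_1a_2+\sqrt{a_1^2a_2^2-4a_1a_2}}{2a_1}$, $\gamma_k=\alpha$ ($k$ even), $\beta$ ($k$ odd). Fix $\lambda=k_1\Lambda_1-k_2\Lambda_2$,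 $k_1,k_2\in\mathbb Z_{>0}$, with: if $a_1,a_2\ge2$, $k_2\le k_1<(a_1-1)k_2$ or $k_1<k_2\le(a_2-1)k_1$; if $a_1=1$, $2k_1\le k_2\le(a_2-2)k_1$; if $a_2=1$, $2k_2\le k_1\le(a_1-2)k_2$. Let $p_0=k_2$, $p_1=k_1$, $p_{m+2}=a_2p_{m+1}-p_m$ ($m\ge0$ even), $p_{m+2}=a_1p_{m+1}-p_m$ ($m\ge0$ odd). Define $c'_0=0$, $c'_1=1$, $c'_{j+2}=a_2c'_{j+1}-c'_j$ ($j$ even), $c'_{j+2}=a_1c'_{j+1}-c'_j$ ($j$ odd). *)

(* Defs.v *)
From Stdlib Require Import Reals ZArith Arith List Lia.
Import ListNotations.
Open Scope Z_scope.

Definition ik (k : nat) : nat := if Nat.odd k then 1%nat else 2%nat.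

Definition cartan (a1 a2 : nat) (i j : nat) : Z :=
  if Nat.eqb i j then 2
  else if Nat.eqb i 1 then - Z.of_nat a1 else - Z.of_nat a2.

Definition sum_range (f : nat -> Z) (lo hi : nat) : Z :=
  fold_right Z.add 0 (map f (seq lo (hi - lo))).

(* Sequences (..., x_2, x_1) are functions nat -> nat; index 0 is unused. *)
Definition finsupp (x : nat -> nat) (N : nat) : Prop :=
  forall j, (N < j)%nat -> x j = 0%nat.

(* Nakashima-Zelevinsky sigma_k(x) = x_k + sum_{j>k} <h_{i_k}, alpha_{i_j}> x_j,
   computed with a bound N of the support of x (value independent of N). *)
Definition sigmaNZ (a1 a2 : nat) (x : nat -> nat) (N k : nat) : Z :=
  Z.of_nat (x k) +
  sum_range (fun j => cartan a1 a2 (ik k) (ik j) * Z.of_nat (x j)) (S k) (S N).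

(* Kashiwara operator f~_i of the NZ crystal structure on Z^{+oo}_{>=0}:
   y = f~_i x iff y = x + 1 at position m_f = min M^{(i)}, where
   M^{(i)} = {k : i_k = i, sigma_k(x) = max_{l : i_l = i} sigma_l(x)}. *)
Definition ftilde (a1 a2 : nat) (i : nat) (x y : nat -> nat) : Prop :=
  exists m N : nat,
    (1 <= m)%nat /\ ik m = i /\ finsupp x N /\
    (forall k, (1 <= k)%nat -> ik k = i -> sigmaNZ a1 a2 x N k <= sigmaNZ a1 a2 x N m) /\
    (forall k, (1 <= k < m)%nat -> ik k = i -> sigmaNZ a1 a2 x N k < sigmaNZ a1 a2 x N m) /\
    y = (fun j => if Nat.eqb j m then S (x j) else x j).

(* Im(Psi^+): since B(infinity) is generated from its highest element by the
   f~_i and Psi^+ is a strict crystal embedding sending it to the zero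
   sequence, the image is the set of sequences obtained from 0 by applying
   f~_1, f~_2. *)
Inductive ImPsi (a1 a2 : nat) : (nat -> nat) -> Prop :=
| ImPsi_zero : ImPsi a1 a2 (fun _ => 0%nat)
| ImPsi_f : forall i x y, (i = 1 \/ i = 2)%nat -> ImPsi a1 a2 x ->
    ftilde a1 a2 i x y -> ImPsi a1 a2 y.

Definition rcoef (a1 a2 : nat) (m : nat) : Z :=
  if Nat.even m then Z.of_nat a2 else Z.of_nat a1.

Fixpoint rec_pair (a1 a2 : nat) (s0 s1 : Z) (n : nat) : Z * Z :=
  match n with
  | O => (s0, s1)
  | S n' => let (u, v) := rec_pair a1 a2 s0 s1 n' in (v, rcoef a1 a2 n' * v - u)
  end.

Definition pseq (a1 a2 k1 k2 : nat) (m : nat) : Z :=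
  fst (rec_pair a1 a2 (Z.of_nat k2) (Z.of_nat k1) m).

Definition cprime (a1 a2 : nat) (j : nat) : Z :=
  fst (rec_pair a1 a2 0 1 j).

Open Scope R_scope.

Definition alphaR (a1 a2 : nat) : R :=
  (INR a1 * INR a2 + sqrt (INR a1 ^ 2 * INR a2 ^ 2 - 4 * INR a1 * INR a2)) / (2 * INR a2).
Definition betaR (a1 a2 : nat) : R :=
  (INR a1 * INR a2 + sqrt (INR a1 ^ 2 * INR a2 ^ 2 - 4 * INR a1 * INR a2)) / (2 * INR a1).
Definition gammaR (a1 a2 : nat) (k : nat) : R :=
  if Nat.even k then alphaR a1 a2 else betaR a1 a2.

(* Main.v *)
Require Import Defs.
From Stdlib Require Import Reals ZArith Arith List Lia.
From Stdlib Require Import Lra Psatz.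

Lemma rec_pair_SS a1 a2 s0 s1 n :
  fst (rec_pair a1 a2 s0 s1 (S (S n))) =
  (rcoef a1 a2 n * fst (rec_pair a1 a2 s0 s1 (S n)) - fst (rec_pair a1 a2 s0 s1 n))%Z.
Proof. simpl. destruct (rec_pair a1 a2 s0 s1 n). simpl. reflexivity. Qed.

Lemma ik_ge1 k : (1 <= ik k)%nat.
Proof. unfold ik; destruct (Nat.odd k); lia. Qed.

Lemma parity l k : Nat.even (2 * l + ik k - 1) = Nat.even (S k).
Proof.
  unfold ik. rewrite Nat.even_succ. destruct (Nat.odd k) eqn:E.
  - replace (2 * l + 1 - 1)%nat with (2 * l)%nat by lia. rewrite Nat.even_mul. reflexivity.
  - replace (2 * l + 2 - 1)%nat with (S (2 * l))%nat by lia.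
    rewrite Nat.even_succ, Nat.odd_mul. reflexivity.
Qed.
Open Scope R_scope.
Lemma alg (A1 A2 : R) : 1 <= A1 -> 1 <= A2 -> 4 < A1*A2 ->
  let r := sqrt (A1 ^ 2 * A2 ^ 2 - 4 * A1 * A2) in
  let al := (A1*A2 + r)/(2*A2) in let be := (A1*A2+r)/(2*A1) in
  0 < al /\ 0 < be /\ 1 < al*be /\ (A2 - be)*al = 1 /\ (A1 - al)*be = 1.
Proof.
  intros h1 h2 h3 r al be.
  assert (hr0 : 0 <= r) by apply sqrt_pos.
  assert (hr : r*r = A1 ^ 2 * A2 ^ 2 - 4 * A1 * A2) by (apply sqrt_sqrt; nra).
  assert (hP : 0 < A1*A2) by lra.
  unfold al, be. repeat split.
  - apply Rdiv_lt_0_compat; lra.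
  - apply Rdiv_lt_0_compat; lra.
  - replace ((A1 * A2 + r) / (2 * A2) * ((A1 * A2 + r) / (2 * A1))) with ((A1*A2+r)*(A1*A2+r)/(4*(A1*A2))) by (field; lra).
    apply Rmult_lt_reg_r with (4*(A1*A2)); [lra|]. unfold Rdiv; rewrite Rmult_assoc, Rinv_l by lra. nra.
  - field_simplify; try lra. replace (r^2) with (r*r) by ring. rewrite hr. field. lra.
  - field_simplify; try lra. replace (r^2) with (r*r) by ring. rewrite hr. field. lra.
Qed.

Section S.
Variables (c g rr : nat -> R) (G : R).
Hypotheses (c0 : c 0%nat = 0) (c1 : c 1%nat = 1)
  (crec : forall j, c (S (S j)) = rr j * c (S j) - c j)
  (grr : forall j, (rr j - g (S j)) * g j = 1)
  (gpos : forall j, 0 < g j) (gG : forall j, g j * g (S j) = G) (G1 : 1 < G).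

Definition Dd j := c (S j) - g j * c j.

Lemma L1 j : g j * Dd (S j) = Dd j.
Proof.
  unfold Dd. rewrite crec.
  transitivity ((rr j - g (S j)) * g j * c (S j) - g j * c j); [ring|].
  rewrite grr. ring.
Qed.

Lemma L2 j : 0 < Dd j.
Proof.
  induction j.
  - unfold Dd. rewrite c0, c1. lra.
  - pose proof (L1 j). pose proof (gpos j). nra.
Qed.

Lemma L3 j : Dd (S (S j)) <= Dd j.
Proof.
  pose proof (L1 j). pose proof (L1 (S j)). pose proof (gG j).
  pose proof (L2 j). pose proof (L2 (S (S j))). pose proof (gpos j).
  assert (G * Dd (S (S j)) = Dd j) by (rewrite <- H1; nra).
  nra.
Qed.

Lemma L4 j : Dd j <= Rmax (Dd 0) (Dd 1).
Proof.
  assert (forall n, Dd n <= Rmax (Dd 0) (Dd 1) /\ Dd (S n) <= Rmax (Dd 0) (Dd 1)).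
  { induction n.
    - split; [apply Rmax_l | apply Rmax_r].
    - destruct IHn. split; auto. pose proof (L3 n). lra. }
  apply H.
Qed.

Lemma L5 j : 0 <= c j.
Proof.
  induction j.
  - rewrite c0; lra.
  - pose proof (L2 j). pose proof (gpos j). unfold Dd in H. nra.
Qed.

Lemma L6 j : G * c j <= c (S (S j)).
Proof.
  pose proof (L2 j). pose proof (L2 (S j)). pose proof (gpos (S j)).
  pose proof (gG j). unfold Dd in *. pose proof (L5 j). nra.
Qed.

Lemma L7 j n : c j + INR n * (G - 1) * c j <= c (j + 2 * n)%nat.
Proof.
  induction n.
  - simpl. replace (j+0)%nat with j by lia. lra.
  - replace (j + 2 * S n)%nat with (S (S (j + 2 * n))) by lia.
    pose proof (L6 (j + 2 * n)). rewrite S_INR.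
    pose proof (L5 j). pose proof (pos_INR n).
    assert (0 <= INR n * (G - 1) * c j) by (apply Rmult_le_pos; nra).
    nra.
Qed.

Lemma L8 j B : (1 <= j)%nat -> exists n, B < c (j + 2 * n)%nat.
Proof.
  intros hj.
  assert (cj : 0 < c j).
  { destruct j; [lia|]. pose proof (L2 j). pose proof (L5 j). pose proof (gpos j). unfold Dd in *. nra. }
  destruct (INR_archimed ((G-1) * c j) B) as [n Hn]. { apply Rmult_lt_0_compat; lra. }
  exists n. pose proof (L7 j n). nra.
Qed.

End S.
Close Scope R_scope.

Theorem proposition4p6 (a1 a2 k1 k2 : nat) (x : nat -> nat) (k : nat) :
  (1 <= a1)%nat -> (1 <= a2)%nat -> (4 < a1 * a2)%nat ->
  (0 < k1)%nat -> (0 < k2)%nat ->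
  ((2 <= a1)%nat -> (2 <= a2)%nat ->
     ((k2 <= k1)%nat /\ (k1 < (a1 - 1) * k2)%nat) \/
     ((k1 < k2)%nat /\ (k2 <= (a2 - 1) * k1)%nat)) ->
  (a1 = 1%nat -> (2 * k1 <= k2)%nat /\ (k2 <= (a2 - 2) * k1)%nat) ->
  (a2 = 1%nat -> (2 * k2 <= k1)%nat /\ (k1 <= (a1 - 2) * k2)%nat) ->
  ImPsi a1 a2 x ->
  (forall m, (1 <= m)%nat -> (Z.of_nat (x m) <= pseq a1 a2 k1 k2 m)%Z) ->
  (1 <= k)%nat ->
  ((forall l : nat, (1 <= l)%nat ->
      (cprime a1 a2 (2 * l + ik k) * (Z.of_nat (x (S k)) - pseq a1 a2 k1 k2 (S k))
       - cprime a1 a2 (2 * l + ik k - 1) * (Z.of_nat (x k) - pseq a1 a2 k1 k2 k) <= 0)%Z)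
   <->
   (gammaR a1 a2 (S k) * IZR (pseq a1 a2 k1 k2 (S k)) - IZR (pseq a1 a2 k1 k2 k)
    + INR (x k) - gammaR a1 a2 (S k) * INR (x (S k)) >= 0)%R).
Proof.
  intros h1 h2 h3 _ _ _ _ _ _ hx hk.
  assert (H1 : (1 <= INR a1)%R) by (apply (le_INR 1) in h1; simpl in h1; lra).
  assert (H2 : (1 <= INR a2)%R) by (apply (le_INR 1) in h2; simpl in h2; lra).
  assert (H3 : (4 < INR a1 * INR a2)%R).
  { rewrite <- mult_INR. apply lt_INR in h3. replace 4%R with (INR 4) by (simpl; lra). exact h3. }
  assert (Halg : (0 < alphaR a1 a2 /\ 0 < betaR a1 a2 /\ 1 < alphaR a1 a2 * betaR a1 a2 /\
     (INR a2 - betaR a1 a2) * alphaR a1 a2 = 1 /\ (INR a1 - alphaR a1 a2) * betaR a1 a2 = 1)%R)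
    by exact (alg (INR a1) (INR a2) H1 H2 H3).
  destruct Halg as (ha & hb & hab & e1 & e2).
  set (c := fun j => IZR (cprime a1 a2 j)).
  set (g := gammaR a1 a2).
  set (rr := fun j : nat => if Nat.even j then INR a2 else INR a1).
  set (G := (alphaR a1 a2 * betaR a1 a2)%R).
  assert (c0 : c 0%nat = 0%R) by reflexivity.
  assert (c1 : c 1%nat = 1%R) by reflexivity.
  assert (crec : forall j, c (S (S j)) = (rr j * c (S j) - c j)%R).
  { intro j. unfold c. unfold cprime at 1. rewrite rec_pair_SS.
    rewrite minus_IZR, mult_IZR. unfold rr, rcoef. destruct (Nat.even j); rewrite <- INR_IZR_INZ; reflexivity. }
  assert (grr : forall j, ((rr j - g (S j)) * g j = 1)%R).
  { intro j. unfold rr, g, gammaR. rewrite Nat.even_succ, <- Nat.negb_even.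
    destruct (Nat.even j); simpl; assumption. }
  assert (gpos : forall j, (0 < g j)%R).
  { intro j. unfold g, gammaR. destruct (Nat.even j); assumption. }
  assert (gG : forall j, (g j * g (S j) = G)%R).
  { intro j. unfold g, G, gammaR. rewrite Nat.even_succ, <- Nat.negb_even.
    destruct (Nat.even j); simpl; ring. }
  set (P := pseq a1 a2 k1 k2).
  set (u := (INR (x (S k)) - IZR (P (S k)))%R).
  set (v := (INR (x k) - IZR (P k))%R).
  assert (hu : (u <= 0)%R).
  { unfold u. assert (hh := hx (S k) ltac:(lia)). apply IZR_le in hh. rewrite <- INR_IZR_INZ in hh. fold P in hh. lra. }
  assert (hv : (v <= 0)%R).
  { unfold v. assert (hh := hx k hk). apply IZR_le in hh. rewrite <- INR_IZR_INZ in hh. fold P in hh. lra. }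
  assert (conv : forall l : nat,
    (cprime a1 a2 (2 * l + ik k) * (Z.of_nat (x (S k)) - P (S k))
       - cprime a1 a2 (2 * l + ik k - 1) * (Z.of_nat (x k) - P k) <= 0)%Z <->
    (c (S (2 * l + ik k - 1)) * u - c (2 * l + ik k - 1)%nat * v <= 0)%R).
  { intro l. replace (2 * l + ik k)%nat with (S (2 * l + ik k - 1)) by (pose proof (ik_ge1 k); lia).
    replace (S (2 * l + ik k - 1) - 1)%nat with (2 * l + ik k - 1)%nat by lia.
    assert (E : IZR (cprime a1 a2 (S (2 * l + ik k - 1)) * (Z.of_nat (x (S k)) - P (S k))
       - cprime a1 a2 (2 * l + ik k - 1) * (Z.of_nat (x k) - P k))%Z
       = (c (S (2 * l + ik k - 1)) * u - c (2 * l + ik k - 1)%nat * v)%R).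
    { rewrite minus_IZR, !mult_IZR, !minus_IZR, <- !INR_IZR_INZ. reflexivity. }
    split; intro H; [apply IZR_le in H;  rewrite E in H; exact H | apply le_IZR; rewrite E; exact H]. }
  fold P.
  assert (gm : forall l, g (2 * l + ik k - 1)%nat = gammaR a1 a2 (S k)).
  { intro l. unfold g, gammaR. rewrite parity. reflexivity. }
  change (gammaR a1 a2 (S k)) with (g (S k)) in gm. set (gam := g (S k)) in *.
  replace (gam * IZR (P (S k)) - IZR (P k) + INR (x k) - gam * INR (x (S k)))%R
    with (v - gam * u)%R by (unfold u, v; ring).
  split.
  - intro H. destruct (Rlt_le_dec (v - gam * u) 0%R) as [Hlt|Hge]; [|lra].
    exfalso.
    set (M := Rmax (Dd c g 0) (Dd c g 1)).
    set (eps := (gam * u - v)%R).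
    assert (heps : (0 < eps)%R) by (unfold eps; lra).
    assert (hM : (0 < M)%R) by (unfold M; pose proof (L2 c g rr c0 c1 crec grr gpos 0); 
       pose proof (Rmax_l (Dd c g 0) (Dd c g 1)); lra).
    destruct (L8 c g rr G c0 c1 crec grr gpos gG hab (S (ik k)) (- M * u / eps)%R ltac:(lia)) as [n Hn].
    assert (Hl := H (S n) ltac:(lia)). apply conv in Hl.
    set (m := (2 * S n + ik k - 1)%nat) in *.
    assert (em : (S (ik k) + 2 * n)%nat = m) by (unfold m; lia).
    rewrite em in Hn.
    assert (hD : Dd c g m = (c (S m) - gam * c m)%R) by (unfold Dd; rewrite <- (gm (S n)); reflexivity).
    pose proof (L4 c g rr G c0 c1 crec grr gpos gG hab m) as hDM. fold M in hDM.
    pose proof (L2 c g rr c0 c1 crec grr gpos m) as hD0.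
    assert (hB : (- M * u < c m * eps)%R).
    { apply (Rmult_lt_compat_r eps) in Hn; [|lra].
      unfold Rdiv in Hn. rewrite Rmult_assoc, Rinv_l in Hn by lra. lra. }
    assert (c (S m) * u - c m * v = c m * eps + Dd c g m * u)%R by (rewrite hD; unfold eps; ring).
    assert (Dd c g m * u >= M * u)%R by nra.
    lra.
  - intros H l hl. apply conv.
    set (m := (2 * l + ik k - 1)%nat).
    assert (hD : Dd c g m = (c (S m) - gam * c m)%R) by (unfold Dd; rewrite <- (gm l); reflexivity).
    pose proof (L2 c g rr c0 c1 crec grr gpos m) as hD0.
    pose proof (L5 c g rr c0 c1 crec grr gpos m) as hc.
    assert (c (S m) * u - c m * v = c m * (gam * u - v) + Dd c g m * u)%R by (rewrite hD; ring).
    nra.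
Qed.
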